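(* Let $\mathcal X$ and $\mathcal Y$ be measurable spaces. Let $\mathcal M_X$ be an exponential family on $\mathcal X$ with sufficient statistic $\mathbf s_X:\mathcal X\to\mathbb R^{d_X}$, base measure $\nu_X$ and log-partition function $\psi_X(\boldsymbol\theta)=\log\int_{\mathcal X} e^{\mathbf s_X(x)\cdot\boldsymbol\theta}\,\nu_X(dx)$, and let $\mathcal M_Y$ be an exponential family on $\mathcal Y$ with sufficient statistic $\mathbf s_Y:\mathcal Y\to\mathbb R^{d_Y}$, base measure $\nu_Y$ and log-partition function $\psi_Y$. Let $p(x,y)$ be a harmonium with natural parameters $(\boldsymbol\theta_X,\boldsymbol\theta_Y,\boldsymbol\Theta_{XY})$, where $\boldsymbol\theta_X\in\mathbb R^{d_X}$, $\boldsymbol\theta_Y\in\mathbb R^{d_Y}$, $\boldsymbol\Theta_{XY}\in\mathbb R^{d_X\times d_Y}$, i.e. $$p(x,y)=e^{\mathbf s_X(x)\cdot\boldsymbol\theta_X+\mathbf s_Y(y)\cdot\boldsymbol\theta_Y+\mathbf s_X(x)\cdot\boldsymbol\Theta_{XY}\cdot\mathbf s_Y(y)-\psi_{XY}(\boldsymbol\theta_X,\boldsymbol\theta_Y,\boldsymbol\Theta_{XY})}\nu_X(x)\nu_Y(y),$$ with $\psi_{XY}$ the (finite) normalizing log-partition function, and let $p(y)=\int_{\mathcal X}p(x,y)\,dx$ denote its prior (marginal on $\mathcal Y$). Then the following are equivalent: (i) there exists $\boldsymbol\theta^*_Y$ such that $p(y)\propto \nu_Y(y)\,e^{\mathbf s_Y(y)\cdot\boldsymbol\theta^*_Y}$;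 (ii) there exist a vector $\boldsymbol\rho_Y\in\mathbb R^{d_Y}$ and a constant $\rho_0\in\mathbb R$ such that for all $y\in\mathcal Y$, $$\psi_X(\boldsymbol\theta_X+\boldsymbol\Theta_{XY}\cdot\mathbf s_Y(y))=\mathbf s_Y(y)\cdot\boldsymbol\rho_Y+\rho_0 .$$ Moreover, in this case the prior parameters are $\boldsymbol\theta^*_Y=\boldsymbol\theta_Y+\boldsymbol\rho_Y$.
   Context: An exponential family with sufficient statistic $\mathbf s$ and base measure $\nu$ consists of densities $p(x;\boldsymbol\theta)=e^{\mathbf s(x)\cdot\boldsymbol\theta-\psi(\boldsymbol\theta)}\nu(x)$ with natural parameters $\boldsymbol\theta$ and log-partition function $\psi$. A harmonium built from two exponential families is the exponential family on $\mathcal X\times\mathcal Y$ with base measure $\nu_X(x)\nu_Y(y)$ and sufficient statistic $(\mathbf s_X(x),\mathbf s_Y(y),\mathbf s_X(x)\otimes\mathbf s_Y(y))$, as written in the claim. A harmonium satisfying condition (ii) is called conjugated, and $\boldsymbol\rho_Y,\rho_0$ are called its conjugation parameters. *)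

(* Defs.v *)
From HB Require Import structures.
From mathcomp Require Import all_boot all_order all_algebra.
From mathcomp Require Import all_classical all_reals all_analysis.
Set Implicit Arguments. Unset Strict Implicit. Unset Printing Implicit Defensive.
Import Order.TTheory GRing.Theory Num.Theory.
Local Open Scope ring_scope.

Definition dotv (R : realType) (n : nat) (u v : 'rV[R]_n) : R := (u *m v^T) 0 0.

Definition bilin (R : realType) (m n : nat) (u : 'rV[R]_m) (M : 'M[R]_(m, n))
  (v : 'rV[R]_n) : R := (u *m M *m v^T) 0 0.

Definition measurable_stat (d : measure_display) (T : measurableType d)
  (R : realType) (n : nat) (s : T -> 'rV[R]_n) : Prop :=
  forall i : 'I_n, measurable_fun setT (fun x => s x 0 i).

Definition log_partition (d : measure_display) (T : measurableType d)
  (R : realType) (n : nat) (mu : {measure set T -> \bar R})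
  (s : T -> 'rV[R]_n) (th : 'rV[R]_n) : \bar R :=
  lne (\int[mu]_x (expR (dotv (s x) th))%:E)%E.

Definition harm_energy (dX dY : measure_display) (X : measurableType dX)
  (Y : measurableType dY) (R : realType) (nX nY : nat)
  (sX : X -> 'rV[R]_nX) (sY : Y -> 'rV[R]_nY)
  (thX : 'rV[R]_nX) (thY : 'rV[R]_nY) (Th : 'M[R]_(nX, nY)) (x : X) (y : Y) : R :=
  dotv (sX x) thX + dotv (sY y) thY + bilin (sX x) Th (sY y).

Definition harm_log_partition (dX dY : measure_display) (X : measurableType dX)
  (Y : measurableType dY) (R : realType) (nX nY : nat)
  (muX : {sigma_finite_measure set X -> \bar R})
  (muY : {sigma_finite_measure set Y -> \bar R})
  (sX : X -> 'rV[R]_nX) (sY : Y -> 'rV[R]_nY)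
  (thX : 'rV[R]_nX) (thY : 'rV[R]_nY) (Th : 'M[R]_(nX, nY)) : \bar R :=
  lne (\int[muX \x muY]_z (expR (harm_energy sX sY thX thY Th z.1 z.2))%:E)%E.

(* Harmonium density p(x,y) with respect to nu_X (x) nu_Y. *)
Definition harm_density (dX dY : measure_display) (X : measurableType dX)
  (Y : measurableType dY) (R : realType) (nX nY : nat)
  (muX : {sigma_finite_measure set X -> \bar R})
  (muY : {sigma_finite_measure set Y -> \bar R})
  (sX : X -> 'rV[R]_nX) (sY : Y -> 'rV[R]_nY)
  (thX : 'rV[R]_nX) (thY : 'rV[R]_nY) (Th : 'M[R]_(nX, nY)) (x : X) (y : Y) : R :=
  expR (harm_energy sX sY thX thY Th x y
        - fine (harm_log_partition muX muY sX sY thX thY Th)).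

Definition harm_prior (dX dY : measure_display) (X : measurableType dX)
  (Y : measurableType dY) (R : realType) (nX nY : nat)
  (muX : {sigma_finite_measure set X -> \bar R})
  (muY : {sigma_finite_measure set Y -> \bar R})
  (sX : X -> 'rV[R]_nX) (sY : Y -> 'rV[R]_nY)
  (thX : 'rV[R]_nX) (thY : 'rV[R]_nY) (Th : 'M[R]_(nX, nY)) (y : Y) : \bar R :=
  (\int[muX]_x (harm_density muX muY sX sY thX thY Th x y)%:E)%E.

(* Main.v *)
Require Import Defs.
From HB Require Import structures.
From mathcomp Require Import all_boot all_order all_algebra.
From mathcomp Require Import all_classical all_reals all_analysis measurable_realfun.
From mathcomp Require Import lra ring.
Import Order.TTheory GRing.Theory Num.Theory.
Local Open Scope ring_scope.

Lemma dotvD (R : realType) n (u a b : 'rV[R]_n) :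
  dotv u (a + b) = dotv u a + dotv u b.
Proof. by rewrite /dotv linearD /= mulmxDr mxE. Qed.

Lemma dotvB (R : realType) n (u a b : 'rV[R]_n) :
  dotv u (a - b) = dotv u a - dotv u b.
Proof. by rewrite /dotv linearB /= mulmxBr !mxE. Qed.

Lemma energyE (dX dY : measure_display) (X : measurableType dX)
  (Y : measurableType dY) (R : realType) (nX nY : nat)
  (sX : X -> 'rV[R]_nX) (sY : Y -> 'rV[R]_nY)
  (thX : 'rV[R]_nX) (thY : 'rV[R]_nY) (Th : 'M[R]_(nX, nY)) x y :
  harm_energy sX sY thX thY Th x y =
  dotv (sY y) thY + dotv (sX x) (thX + sY y *m Th^T).
Proof.
rewrite /harm_energy dotvD /bilin /dotv trmx_mul trmxK mulmxA.
by rewrite addrAC addrC.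
Qed.

Lemma meas_dotv d (T : measurableType d) (R : realType) n (s : T -> 'rV[R]_n)
  (v : 'rV[R]_n) : measurable_stat s ->
  measurable_fun setT (fun x => (expR (dotv (s x) v))%:E).
Proof.
move=> ms; apply/measurable_EFinP.
apply: measurableT_comp; first exact: measurable_expR.
rewrite /dotv.
have -> : (fun x => (s x *m v^T) 0 0) = (fun x => \sum_(j <- index_enum 'I_n) (fun j x => s x 0 j * v 0 j) j x).
  by apply/funext => x; rewrite mxE; apply: eq_bigr => j _; rewrite mxE.
apply: measurable_sum => j.
by apply: measurable_funM => //; exact: measurable_cst.
Qed.

Definition log_partition_int {d : measure_display} {T : measurableType d}
  {R : realType} {n : nat} (mu : {measure set T -> \bar R})
  (s : T -> 'rV[R]_n) (th : 'rV[R]_n) : \bar R :=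
  (\int[mu]_x (expR (dotv (s x) th))%:E)%E.

Lemma priorE (R : realType) (dX dY : measure_display)
  (X : measurableType dX) (Y : measurableType dY) (nX nY : nat)
  (muX : {sigma_finite_measure set X -> \bar R})
  (muY : {sigma_finite_measure set Y -> \bar R})
  (sX : X -> 'rV[R]_nX) (sY : Y -> 'rV[R]_nY)
  (thX : 'rV[R]_nX) (thY : 'rV[R]_nY) (Th : 'M[R]_(nX, nY)) y :
  measurable_stat sX ->
  harm_prior muX muY sX sY thX thY Th y =
  ((expR (dotv (sY y) thY - fine (harm_log_partition muX muY sX sY thX thY Th)))%:E *
   log_partition_int muX sX (thX + sY y *m Th^T))%E.
Proof.
move=> msX; rewrite /harm_prior /log_partition_int.
set a := fine _.
rewrite -ge0_integralZl_EFin; last 4 first.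
- exact: measurableT.
- by move=> x _; rewrite lee_fin expR_ge0.
- exact: meas_dotv.
- exact: expR_ge0.
apply: eq_integral => x _.
rewrite /harm_density energyE -/a -EFinM -expRD; congr (_%:E); congr expR; lra.
Qed.

Theorem lemma1 (R : realType) (dX dY : measure_display)
  (X : measurableType dX) (Y : measurableType dY) (nX nY : nat)
  (muX : {sigma_finite_measure set X -> \bar R})
  (muY : {sigma_finite_measure set Y -> \bar R})
  (sX : X -> 'rV[R]_nX) (sY : Y -> 'rV[R]_nY)
  (thX : 'rV[R]_nX) (thY : 'rV[R]_nY) (Th : 'M[R]_(nX, nY)) :
  measurable_stat sX -> measurable_stat sY ->
  (harm_log_partition muX muY sX sY thX thY Th \is a fin_num)%E ->
  ((exists thY' : 'rV[R]_nY, exists c : R, 0 < c /\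
      forall y : Y, harm_prior muX muY sX sY thX thY Th y
                    = (c * expR (dotv (sY y) thY'))%:E)
   <->
   (exists (rhoY : 'rV[R]_nY) (rho0 : R), forall y : Y,
      log_partition muX sX (thX + sY y *m Th^T) = (dotv (sY y) rhoY + rho0)%:E))
  /\
  (forall (rhoY : 'rV[R]_nY) (rho0 : R),
     (forall y : Y,
        log_partition muX sX (thX + sY y *m Th^T) = (dotv (sY y) rhoY + rho0)%:E) ->
     exists c : R, 0 < c /\
       forall y : Y, harm_prior muX muY sX sY thX thY Th y
                     = (c * expR (dotv (sY y) (thY + rhoY)))%:E).
Proof.
move=> msX msY _.
set psi := fine (harm_log_partition muX muY sX sY thX thY Th).
have I0 v : (0 <= log_partition_int muX sX v)%E.
  by apply: integral_ge0 => x _; rewrite lee_fin expR_ge0.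
have part2 : forall (rhoY : 'rV[R]_nY) (rho0 : R),
     (forall y : Y,
        log_partition muX sX (thX + sY y *m Th^T) = (dotv (sY y) rhoY + rho0)%:E) ->
     exists c : R, 0 < c /\
       forall y : Y, harm_prior muX muY sX sY thX thY Th y
                     = (c * expR (dotv (sY y) (thY + rhoY)))%:E.
  move=> rhoY rho0 H; exists (expR (rho0 - psi)); split; first exact: expR_gt0.
  move=> y; rewrite priorE //.
  have := H y; rewrite /log_partition -/(log_partition_int _ _ _) => Hy.
  have -> : log_partition_int muX sX (thX + sY y *m Th^T)
          = (expR (dotv (sY y) rhoY + rho0))%:E.
    rewrite -[RHS]/(expeR ((dotv (sY y) rhoY + rho0)%:E)) -Hy lneK // in_itv /= I0 /=; exact: leey.
  rewrite -EFinM -!expRD dotvD; congr (_%:E); congr expR.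
  by rewrite /psi; lra.
split => //; split.
  move=> [thY' [c [c0 H]]].
  exists (thY' - thY), (ln c + psi) => y.
  have := H y; rewrite priorE // /log_partition -/(log_partition_int _ _ _).
  have := I0 (thX + sY y *m Th^T).
  case: (log_partition_int muX sX (thX + sY y *m Th^T)) => [r| |] // r0.
  - rewrite -EFinM; case => Hr.
    have -> : r = expR (ln c + psi + dotv (sY y) (thY' - thY)).
      rewrite -/psi in Hr.
      have ea := expR_gt0 (dotv (sY y) thY - psi).
      have -> : r = c * expR (dotv (sY y) thY') / expR (dotv (sY y) thY - psi).
        by rewrite -Hr; field; rewrite gt_eqF.
      rewrite !expRD lnK ?posrE // dotvB !expRB expRN.
      field; rewrite !gt_eqF ?expR_gt0 //.
    by rewrite lne_EFin ?expR_gt0 // expRK; congr (_%:E); lra.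
  - by rewrite gt0_muley ?lte_fin ?expR_gt0.
move=> [rhoY [rho0 H]].
have [c [c0 Hc]] := part2 rhoY rho0 H.
by exists (thY + rhoY), c.
Qed.
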